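(* Let $T>0$, let $h:(0,\infty)\to(0,\infty)$ be bounded with $\lim_{u\to0^+}h(u)=\lim_{u\to+\infty}h(u)=0$, and let $A\in C^1([0,T]\times(0,1)^n;\mathbb S(n))$ satisfy $|A_{ij}(s,\mu)|\le(\mu^i+\mu^j)h(\mu^j/\mu^i)$ for all $(i,j)\in\mathbb E$ and $(s,\mu)\in[0,T]\times(0,1)^n$. There exist constants $K>1$ and $c_0>0$, depending only on $n$, $\omega_{\min}$, $\omega_{\max}$ and $h$, such that the following holds. Let $\epsilon>0$, $\mu\in\mathcal P_\epsilon(\mathbb G)$, $0<t_0<t_1\le T$, and let $\rho\in C^1([0,t_1];(0,1)^n)$ be a classical solution of $\dot\rho(s)=\nabla_{\mathbb G}\cdot A(s,\rho(s))+\Delta_{\mathbb G}\rho(s)$, $\rho(0)=\mu$. If $\delta\in(0,\epsilon/K)$ and $t_0$, $t_1$ are, respectively, the first times such that $\min_i\rho_i(t_0)=\delta$ and $\min_i\rho_i(t_1)=\delta/(2K)$, then $t_1-t_0\ge c_0$.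
   Context: $\mathbb G=(\mathbb V,\mathbb E,\omega)$: finite, connected, simple undirected graph, $\mathbb V=\{1,\dots,n\}$, edges ordered pairs with $(i,j)\in\mathbb E\iff(j,i)\in\mathbb E$, symmetric weights $\omega_{ij}>0$ iff $(i,j)\in\mathbb E$; $\omega_{\min},\omega_{\max}$ the min/max edge weights. $\mathbb S(n)$: skew-symmetric $n\times n$ matrices. $(\nabla_{\mathbb G}\cdot m)^i=\sum_{j\ne i}\sqrt{\omega_{ij}}m^{ji}$; $(\Delta_{\mathbb G}u)^i=\sum_j\omega_{ij}(u^j-u^i)$. $\mathcal P_\epsilon(\mathbb G)$: probability vectors in $\mathbb R^n$ with all entries $>\epsilon$. *)

(* Defs.v *)
From HB Require Import structures.
From mathcomp Require Import all_boot all_order all_algebra.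
From mathcomp Require Import all_classical all_reals all_analysis.
Set Implicit Arguments. Unset Strict Implicit. Unset Printing Implicit Defensive.
Import Order.TTheory GRing.Theory Num.Theory.
Import numFieldNormedType.Exports.
Local Open Scope classical_set_scope.
Local Open Scope ring_scope.

Section Defs.
Variable R : realType.

(* Vectors of R^n are row vectors 'rV[R]_n, entry i of x is x ord0 i.
   Weighted graph on vertices 'I_n given by its weight matrix w:
   (i,j) is an edge iff w i j > 0. *)
Definition edge n (w : 'M[R]_n) (i j : 'I_n) : Prop := 0 < w i j.

Definition weighted_graph n (w : 'M[R]_n) : Prop :=
  [/\ forall i j, w i j = w j i,
      forall i j, 0 <= w i j,
      forall i, w i i = 0 &
      forall i j, connect (fun a b : 'I_n => 0 < w a b) i j].

Definition min_weight n (w : 'M[R]_n) (wmin : R) : Prop :=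
  (forall i j, edge w i j -> wmin <= w i j) /\ exists i j, edge w i j /\ w i j = wmin.
Definition max_weight n (w : 'M[R]_n) (wmax : R) : Prop :=
  (forall i j, edge w i j -> w i j <= wmax) /\ exists i j, edge w i j /\ w i j = wmax.

Definition gdiv n (w : 'M[R]_n) (m : 'M[R]_n) : 'rV[R]_n :=
  \row_i \sum_(j | j != i) Num.sqrt (w i j) * m j i.

Definition glap n (w : 'M[R]_n) (u : 'rV[R]_n) : 'rV[R]_n :=
  \row_i \sum_j w i j * (u ord0 j - u ord0 i).

Definition cube n (x : 'rV[R]_n) : Prop := forall i, 0 < x ord0 i < 1.

Definition prob_eps n (eps : R) (x : 'rV[R]_n) : Prop :=
  \sum_i x ord0 i = 1 /\ forall i, eps < x ord0 i.

Definition min_is n (x : 'rV[R]_n) (m : R) : Prop :=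
  (forall i, m <= x ord0 i) /\ exists i, x ord0 i = m.

Definition first_min_time n (rho : R -> 'rV[R]_n) (d t : R) : Prop :=
  min_is (rho t) d /\ forall s, 0 <= s < t -> ~ min_is (rho s) d.

Definition domA n (T : R) : set (R * 'rV[R]_n) :=
  [set x | 0 <= x.1 <= T /\ cube x.2].

(* f is C^1 on the set D: f is the restriction of a map which is C^1 on an
   open neighbourhood O of D (all directional derivatives exist on O and are
   continuous there). *)
Definition C1_on (U V : normedModType R) (D : set U) (f : U -> V) : Prop :=
  exists O : set U, [/\ open O, D `<=` O &
    forall (v x : U), O x -> derivable f x v /\ {for x, continuous ('D_v f)}].

(* derivative of f : R -> V at s relative to the interval [a,b]
   (one-sided at the endpoints) equals v *)
Definition has_deriv_on (V : normedModType R) (a b : R) (f : R -> V) (s : R) (v : V)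
  : Prop :=
  (fun k : R => k^-1 *: (f (s + k) - f s)) @ within (fun k => a <= s + k <= b) (0 : R)^'
    --> v.

Definition classical_solution n (w : 'M[R]_n) (A : R * 'rV[R]_n -> 'M[R]_n)
  (t1 : R) (mu : 'rV[R]_n) (rho : R -> 'rV[R]_n) : Prop :=
  [/\ forall s, 0 <= s <= t1 -> cube (rho s),
      rho 0 = mu &
      exists rho' : R -> 'rV[R]_n,
        [/\ forall s, 0 <= s <= t1 -> has_deriv_on 0 t1 rho s (rho' s),
            {within `[0, t1], continuous rho'} &
            forall s, 0 <= s <= t1 -> rho' s = gdiv w (A (s, rho s)) + glap w (rho s)]].

End Defs.

(* Main.v *)
Require Import Defs.
From HB Require Import structures.
From mathcomp Require Import all_boot all_order all_algebra.
From mathcomp Require Import all_classical all_reals all_analysis.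
From mathcomp Require Import ring lra.
Import Order.TTheory GRing.Theory Num.Theory.
Import numFieldNormedType.Exports.
Local Open Scope classical_set_scope.
Local Open Scope ring_scope.

Lemma entry_cvg (R : realType) T (F : set_system T) (FF : Filter F) m n
  (f : T -> 'M[R]_(m,n)) (M : 'M[R]_(m,n)) i j : f @ F --> M -> (fun t => f t i j) @ F --> M i j.
Proof.
move/cvg_mx_entourageP => H.
apply/cvg_entourageP => A entA.
have := H A entA. rewrite !near_map. apply: filterS => t /(_ i j). by rewrite inE.
Qed.

Lemma local_lower (R : realType) (f : R -> R) (s v a b c : R) :
  (fun k => k^-1 * (f (s+k) - f s)) @ within (fun k => a <= s+k <= b) 0^' --> v ->
  c < v -> exists2 e : R, 0 < e & forall k, 0 < `|k| < e -> a <= s+k <= b ->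
     (0 < k -> f s + c*k < f (s+k)) /\ (k < 0 -> f (s+k) < f s + c*k).
Proof.
move=> H cv.
have H2 : nbhs (0:R) (fun k => k != 0 -> a <= s+k <= b -> c < k^-1 * (f (s+k) - f s)).
  exact: (cvgr_gt v H c cv).
case/nbhs_ballP: H2 => e e0 He.
exists e => // k /andP[k0 ke] Dk.
have bk : ball (0:R) e k by rewrite -ball_normE /ball_ /= sub0r normrN.
have kn0 : k != 0 by rewrite -normr_gt0.
have := He k bk kn0 Dk.
set X := f (s + k) - f s => /= hq.
have eX : X = (k^-1 * X) * k by rewrite mulrAC mulVf // mul1r.
move: hq; set q := k^-1 * X => hq.
split => kk.
  have : c * k < q * k by rewrite ltr_pM2r.
  rewrite -eX /X; lra.
have : q * k < c * k by rewrite ltr_nM2r.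
rewrite -eX /X; lra.
Qed.

Lemma comp_deriv (R : realType) n (rho : R -> 'rV[R]_n) a b s v k :
  has_deriv_on a b rho s v ->
  (fun x => x^-1 * (rho (s+x) ord0 k - rho s ord0 k))
     @ within (fun x => a <= s + x <= b) 0^' --> v ord0 k.
Proof.
move=> H; have H' := @entry_cvg _ _ _ _ _ _ _ _ ord0 k H.
have E : (fun x => x^-1 * (rho (s+x) ord0 k - rho s ord0 k)) =
  (fun x => (x^-1 *: (rho (s+x) - rho s)) ord0 k).
  by apply/funext => x; rewrite !mxE.
by rewrite E; exact: H'.
Qed.

Lemma fin_small (R : realType) (I : eqType) (Q : I -> R -> Prop) (s : seq I) :
  (forall i, i \in s -> exists2 e : R, 0 < e & forall h, 0 < h < e -> Q i h) ->
  exists2 e : R, 0 < e & forall h, 0 < h < e -> forall i, i \in s -> Q i h.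
Proof.
elim: s => [|x s IH] H.
  by exists 1 => // h _ i; rewrite in_nil.
have [e1 e10 H1] := H x (mem_head _ _).
have [e2 e20 H2] : exists2 e : R, 0 < e & forall h, 0 < h < e -> forall i, i \in s -> Q i h.
  by apply: IH => i his; apply: H; rewrite in_cons his orbT.
exists (Num.min e1 e2); first by rewrite lt_min e10 e20.
move=> h /andP[h0 he] i; rewrite in_cons => /orP[/eqP ->|his].
  by apply: H1; rewrite h0 /=; apply: (lt_le_trans he); rewrite ge_min lexx.
by apply: H2 => //; rewrite h0 /=; apply: (lt_le_trans he); rewrite ge_min lexx orbT.
Qed.
Arguments local_lower {R f s v a b c}.
Arguments fin_small {R I Q s}.

Lemma comparison (R : realType) n (rho rho' : R -> 'rV[R]_n) (t0 t1 b0 beta : R) :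
  0 <= t0 -> t0 < t1 ->
  (forall s, 0 <= s <= t1 -> has_deriv_on 0 t1 rho s (rho' s)) ->
  (forall k, b0 <= rho t0 ord0 k) ->
  (forall s k, t0 <= s <= t1 -> (forall j, rho s ord0 k <= rho s ord0 j) ->
      rho s ord0 k = b0 - beta * (s - t0) -> - beta < rho' s ord0 k) ->
  forall k, b0 - beta * (t1 - t0) <= rho t1 ord0 k.
Proof.
move=> t00 t01 der init key.
pose b := fun s => b0 - beta * (s - t0).
pose P := fun s => forall k, b s <= rho s ord0 k.
pose S := [set t | t0 <= t <= t1 /\ forall s, t0 <= s <= t -> P s].
have P0 : P t0 by move=> k; rewrite /b subrr mulr0 subr0.
have St0 : S t0.
  split; first by rewrite lexx ltW.
  move=> s /andP[h1 h2]; have -> : s = t0 by apply/eqP; rewrite eq_le h1 h2.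
  exact: P0.
have ubS : ubound S t1 by move=> t [/andP[_ ?] _].
have hasS : has_sup S by split; [exists t0 | exists t1].
pose tau := sup S.
have t0tau : t0 <= tau := sup_upper_bound hasS St0.
have tau1 : tau <= t1 by apply: ge_sup => //; exists t0.
have below : forall s, t0 <= s < tau -> P s.
  move=> s /andP[s0 s1].
  have [e [_ He] Hlt] := sup_adherent (eps := tau - s) (ltac:(lra)) hasS.
  apply: He; rewrite s0 /=; rewrite -/tau in Hlt; lra.
have cd : forall s k, 0 <= s <= t1 ->
   (fun x => x^-1 * (rho (s+x) ord0 k - rho s ord0 k))
     @ within (fun x => 0 <= s + x <= t1) 0^' --> rho' s ord0 k.
  by move=> s k hs; apply: comp_deriv; apply: der.
have dtau : 0 <= tau <= t1 by apply/andP; split; lra.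
have Ptau : P tau.
  move=> k; case: (eqVneq tau t0) => [->|ne]; first exact: P0 k.
  have lt0 : t0 < tau by rewrite lt_neqAle eq_sym ne t0tau.
  rewrite leNgt; apply/negP => hk.
  pose v := rho' tau ord0 k.
  have [e e0 He] := local_lower (f := fun t => rho t ord0 k) (cd tau k dtau) (ltac:(lra) : v - 1 < v).
  pose gap := b tau - rho tau ord0 k.
  pose c := v - 1.
  pose L := `|c| + `|beta| + 1.
  have L0 : 0 < L by rewrite /L; have := normr_ge0 c; have := normr_ge0 beta; lra.
  have gap0 : 0 < gap by rewrite /gap; lra.
  pose m := Num.min (Num.min (e/2) ((tau - t0)/2)) (gap/(2*L)).
  have m0 : 0 < m by rewrite /m !lt_min; apply/andP; split; [apply/andP; split|]; 
     apply: divr_gt0; lra.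
  have m1 : m <= e/2 by rewrite /m !ge_min lexx.
  have m2 : m <= (tau - t0)/2 by rewrite /m !ge_min lexx orbT.
  have m3 : m <= gap/(2*L) by rewrite /m !ge_min lexx orbT.
  have m3' : m * (2 * L) <= gap by rewrite -ler_pdivlMr //; lra.
  have Hm : 0 < `|-m| < e by rewrite normrN gtr0_norm // m0 /=; lra.
  have Dm : 0 <= tau + - m <= t1 by apply/andP; split; lra.
  have [_ H2] := He (-m) Hm Dm.
  have H3 := H2 (ltac:(lra)).
  have H4 := below (tau - m) (ltac:(apply/andP; split; lra)) k.
  rewrite /b in H4 gap0 m3'.
  have hc := ler_norm c. have hc' := ler_norm (- c). rewrite normrN in hc'.
  have hb := ler_norm beta. have hb' := ler_norm (- beta). rewrite normrN in hb'.
  have q1 : 0 <= (`|c| + c) * m by apply: mulr_ge0; lra.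
  have q2 : 0 <= (`|beta| + beta) * m by apply: mulr_ge0; lra.
  have egap : gap = b0 - beta * (tau - t0) - rho tau ord0 k by [].
  have ec : c = v - 1 by [].
  rewrite /b in hk.
  subst c L gap; lra.
have [ltt|eqt] : tau < t1 \/ tau = t1.
  by case: (ltgtP tau t1) => //; [left|lra|right].
  exfalso.
  have loc : forall k, k \in enum 'I_n -> exists2 e : R, 0 < e &
      forall h, 0 < h < e -> tau + h <= t1 -> b (tau + h) <= rho (tau + h) ord0 k.
    move=> k _.
    have := Ptau k; rewrite le_eqVlt => /orP[/eqP eqk|ltk].
      have kk : - beta < rho' tau ord0 k.
        apply: key => //; first by apply/andP; split; lra.
          by move=> j; rewrite -eqk; apply: Ptau.
      have [e e0 He] := local_lower (f := fun t => rho t ord0 k) (cd tau k dtau) kk.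
      exists e => // h /andP[h0 he] ht.
      have Hh : 0 < `|h| < e by rewrite gtr0_norm // h0.
      have [H1 _] := He h Hh (ltac:(apply/andP; split; lra)).
      have := H1 h0; rewrite -eqk /b; lra.
    pose v := rho' tau ord0 k.
    have [e e0 He] := local_lower (f := fun t => rho t ord0 k) (cd tau k dtau) (ltac:(lra) : v - 1 < v).
    pose gap := rho tau ord0 k - b tau.
    pose c := v - 1.
    pose L := `|c| + `|beta| + 1.
    have L0 : 0 < L by rewrite /L; have := normr_ge0 c; have := normr_ge0 beta; lra.
    have gap0 : 0 < gap by rewrite /gap; lra.
    exists (Num.min e (gap/(2*L))).
      by rewrite lt_min e0 /=; apply: divr_gt0; lra.
    move=> h /andP[h0]; rewrite lt_min => /andP[he hg] ht.
    have Hh : 0 < `|h| < e by rewrite gtr0_norm // h0.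
    have [H1 _] := He h Hh (ltac:(apply/andP; split; lra)).
    have H3 := H1 h0.
    have m3' : h * (2 * L) <= gap by rewrite -ler_pdivlMr; lra.
    rewrite /b /gap in m3' gap0 *.
    have hc := ler_norm c. have hc' := ler_norm (- c). rewrite normrN in hc'.
    have hb := ler_norm beta. have hb' := ler_norm (- beta). rewrite normrN in hb'.
    have q1 : 0 <= (`|c| + c) * h by apply: mulr_ge0; lra.
    have q2 : 0 <= (`|beta| + beta) * h by apply: mulr_ge0; lra.
    have egap : gap = rho tau ord0 k - (b0 - beta * (tau - t0)) by [].
    have ec : c = v - 1 by [].
    subst c L gap; lra.
  have [e e0 He] := fin_small loc.
  pose eta := Num.min (e/2) (t1 - tau).
  have eta0 : 0 < eta by rewrite lt_min; apply/andP; split; lra.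
  have eta1 : eta <= e/2 by rewrite ge_min lexx.
  have eta2 : eta <= t1 - tau by rewrite ge_min lexx orbT.
  have Seta : S (tau + eta).
    split; first by apply/andP; split; lra.
    move=> s /andP[s0 s1].
    case: (ltgtP s tau) => [slt|sgt|->]; last exact: Ptau.
      by apply: below; rewrite s0.
    move=> k; have := He (s - tau) (ltac:(apply/andP; split; lra)) k (mem_enum _ k).
    by rewrite addrC subrK; apply; lra.
  have := sup_upper_bound hasS Seta; rewrite -/tau; lra.
move=> k; have := Ptau k; rewrite eqt.
by [].
Qed.

Lemma edge_bound (R : realType) (a b w wmax M u0 hv A : R) :
 0 < a -> a <= b -> 0 < w -> w <= wmax -> 0 < u0 -> 0 <= M ->
 `|A| <= (b + a) * hv -> hv <= M ->
 (a / b < u0 -> hv <= Num.sqrt w) ->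
 - ((2 * wmax + Num.sqrt wmax * M * (u0^-1 + 1)) * a) <= Num.sqrt w * A + w * (b - a).
Proof.
move=> a0 ab w0 wm u00 M0 hA hM hs.
set r := Num.sqrt w.
have r0 : 0 <= r := sqrtr_ge0 w.
have rr : r * r = w by rewrite -expr2 sqr_sqrtr // ltW.
have rm : r <= Num.sqrt wmax by rewrite ler_sqrt //; lra.
have b0 : 0 < b by lra.
have hv0 : 0 <= hv.
  have : 0 <= (b + a) * hv by apply: le_trans hA.
  by rewrite pmulr_rge0 //; lra.
have rA : - (r * ((b + a) * hv)) <= r * A.
  have : - `|A| <= A by rewrite lerNl; have := ler_norm (- A); rewrite normrN.
  move=> h1; rewrite -mulrN; apply: ler_wpM2l => //; lra.
have rA' : r * ((b + a) * hv) <= r * ((b + a) * hv) by [].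
have sw0 : 0 <= Num.sqrt wmax := sqrtr_ge0 wmax.
have X0 : 0 <= Num.sqrt wmax * M * (u0^-1 + 1) * a.
  by apply: mulr_ge0 => //; [apply: mulr_ge0; [apply: mulr_ge0 => // | rewrite addr_ge0 // invr_ge0 ltW] | lra].
case: (ltP (a / b) u0) => hab.
  have h1 := hs hab.
  have : r * ((b + a) * hv) <= r * ((b + a) * r).
    apply: ler_wpM2l => //; apply: ler_wpM2l => //; lra.
  have : r * ((b + a) * r) = w * (b + a) by rewrite -rr; ring.
  have : w * a <= wmax * a by apply: ler_wpM2r; lra.
  have : 0 <= w * (b - a) by apply: mulr_ge0; lra.
  nra.
have bu : b * u0 <= a by rewrite -ler_pdivlMl // mulrC.
have bu' : b <= a * u0^-1 by rewrite ler_pdivlMr.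
have : r * ((b + a) * hv) <= Num.sqrt wmax * ((a * u0^-1 + a) * M).
  apply: ler_pM => //; first by apply: mulr_ge0; lra.
  apply: ler_pM => //; lra.
have : 0 <= w * (b - a) by apply: mulr_ge0; lra.
have : 0 <= wmax * a by apply: mulr_ge0; lra.
have e : Num.sqrt wmax * ((a * u0^-1 + a) * M) = Num.sqrt wmax * M * (u0^-1 + 1) * a by ring.
lra.
Qed.
Arguments edge_bound {R a b w wmax M u0 hv A}.

Theorem lemma2p2 (R : realType) (n : nat) (wmin wmax : R) (h : R -> R)
  (h_pos : forall u : R, 0 < u -> 0 < h u)
  (h_bdd : exists M : R, forall u : R, 0 < u -> h u <= M)
  (h_lim0 : h x @[x --> 0^'+] --> 0)
  (h_liminf : h x @[x --> +oo] --> 0) :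
  exists K c0 : R, 1 < K /\ 0 < c0 /\
  forall w : 'M[R]_n, weighted_graph w -> min_weight w wmin -> max_weight w wmax ->
  forall (T : R) (A : R * 'rV[R]_n -> 'M[R]_n),
    0 < T ->
    C1_on (@domA R n T) A ->
    (forall x, @domA R n T x -> (A x)^T = - A x) ->
    (forall (s : R) (mu : 'rV[R]_n) (i j : 'I_n), 0 <= s <= T -> cube mu -> edge w i j ->
       `|A (s, mu) i j| <= (mu ord0 i + mu ord0 j) * h (mu ord0 j / mu ord0 i)) ->
  forall (eps : R) (mu : 'rV[R]_n) (t0 t1 : R) (rho : R -> 'rV[R]_n) (delta : R),
    0 < eps -> prob_eps eps mu ->
    0 < t0 -> t0 < t1 -> t1 <= T ->
    classical_solution w A t1 mu rho ->
    0 < delta < eps / K ->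
    first_min_time rho delta t0 ->
    first_min_time rho (delta / (2 * K)) t1 ->
    c0 <= t1 - t0.
Proof.
have [M0 hM0] := h_bdd.
have M0pos : 0 < M0 by apply: lt_le_trans (h_pos 1 ltr01) (hM0 1 ltr01).
case: (ltP 0 wmin) => wpos; last first.
  exists 2, 1; split; first lra. split; first lra.
  move=> w _ [_ [i [j [eij ew]]]]; exfalso; rewrite /edge in eij; lra.
have sw : 0 < Num.sqrt wmin by rewrite sqrtr_gt0.
have Hn : nbhs (0:R) (fun x => 0 < x -> h x < Num.sqrt wmin).
  exact: (cvgr_lt 0 h_lim0 _ sw).
case/nbhs_ballP: Hn => u0 u00 Hu0.
have hsmall : forall u, 0 < u < u0 -> h u < Num.sqrt wmin.
  move=> u /andP[u0' uu]; apply: Hu0 => //.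
  by rewrite -ball_normE /ball_ /= sub0r normrN gtr0_norm.
pose Ce := 2 * wmax + Num.sqrt wmax * M0 * (u0^-1 + 1).
pose C := n%:R * `|Ce| + 1.
have nCe0 : 0 <= n%:R * `|Ce| by apply: mulr_ge0.
have C0 : 0 < C by rewrite /C; lra.
exists 2, (4 * C)^-1; split; first lra. split; first by rewrite invr_gt0; lra.
move=> w wg wminh wmaxh T A T0 _ _ Abd eps mu t0 t1 rho delta eps0 pe t00 t01 t1T sol dlt
  ft0 ft1.
case: sol => cub rho0 [rho' [der _ eqn]].
case/andP: dlt => d0 _.
rewrite leNgt; apply/negP => hlt.
have [wg1 wg2 wg3 _] := wg.
have key : forall s k, t0 <= s <= t1 -> (forall j, rho s ord0 k <= rho s ord0 j) ->
   rho s ord0 k = delta - (2*C*delta) * (s - t0) -> - (2*C*delta) < rho' s ord0 k.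
  move=> s k /andP[s0 s1] kmin eqk.
  have hs : 0 <= s <= t1 by apply/andP; split; lra.
  rewrite eqn // !mxE.
  have cs := cub s hs.
  have hsT : 0 <= s <= T by apply/andP; split; lra.
  have Hsum : - (n%:R * `|Ce| * rho s ord0 k) <=
     \sum_(j | j != k) Num.sqrt (w k j) * A (s, rho s) j k
     + \sum_j w k j * (rho s ord0 j - rho s ord0 k).
    rewrite big_mkcond -big_split /=.
    have -> : - (n%:R * `|Ce| * rho s ord0 k) = \sum_(j < n) - (`|Ce| * rho s ord0 k).
      rewrite sumr_const card_ord -(mulr_natl (- (`|Ce| * rho s ord0 k))); ring.
    apply: ler_sum => j _.
    have ak : 0 < rho s ord0 k by case/andP: (cs k).
    have Ca : 0 <= `|Ce| * rho s ord0 k by apply: mulr_ge0 => //; apply: ltW.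
    case: (eqVneq j k) => [->|jk].
      by rewrite /= subrr mulr0 addr0; lra.
    rewrite /=.
    have := wg2 k j; rewrite le_eqVlt => /orP[/eqP w0|wpos'].
      by rewrite -w0 sqrtr0 !mul0r add0r; lra.
    have ejk : edge w j k by rewrite /edge wg1.
    have aj : 0 < rho s ord0 j by case/andP: (cs j).
    have Ab := Abd s (rho s) j k hsT cs ejk.
    have hvM : h (rho s ord0 k / rho s ord0 j) <= M0 by apply: hM0; apply: divr_gt0.
    have hsq : rho s ord0 k / rho s ord0 j < u0 ->
        h (rho s ord0 k / rho s ord0 j) <= Num.sqrt (w k j).
      move=> hu; apply: ltW; apply: (lt_le_trans (hsmall _ _)).
        by rewrite hu andbT; apply: divr_gt0.
      by rewrite ler_sqrt; [apply: wminh.1 | apply: ltW].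
    have := edge_bound ak (kmin j) wpos' (wmaxh.1 k j wpos') u00 (ltW M0pos) Ab hvM hsq.
    have : Ce * rho s ord0 k <= `|Ce| * rho s ord0 k.
      by apply: ler_wpM2r; [apply: ltW | apply: ler_norm].
    rewrite /Ce; lra.
  have ad : rho s ord0 k <= delta.
    have : 0 <= 2 * C * delta * (s - t0) by apply: mulr_ge0; [apply: mulr_ge0|]; lra.
    lra.
  have p1 : n%:R * `|Ce| * rho s ord0 k <= n%:R * `|Ce| * delta by apply: ler_wpM2l.
  have p2 : 0 < (2 * C - n%:R * `|Ce|) * delta by apply: mulr_gt0; rewrite /C; lra.
  lra.
have := @comparison _ _ rho rho' t0 t1 delta (2*C*delta)
  (ltW t00) t01 der (fun k => ft0.1.1 k) key.
case: ft1 => [[_ [i ei]] _] /(_ i); rewrite ei.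
have : (t1 - t0) * (4 * C) < 1 by rewrite -ltr_pdivlMr ?div1r //; lra.
move=> hh.
have : delta * ((t1 - t0) * (4 * C)) < delta * 1 by rewrite ltr_pM2l.
lra.
Qed.
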